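(* Let $G$ be an abelian group, $n\ge 4$ an even integer, and $P_0,P_1,\dots,P_{n-1}$ distinct elements of $G$ forming an alternating cycle in the sum cograph, i.e. there are $a,b\in G$ with $P_i+P_{i+1}=a$ for all even $i$ and $P_i+P_{i+1}=b$ for all odd $i$ (indices modulo $n$). Then $G$ contains a nonzero element $x$ with $(n/2)x=0$.
   Context: A sum cograph over an abelian group $G$ has as points distinct elements of $G$, and the edge between distinct points $X,Y$ is $X+Y$. *)

(* Defs.v *)
From HB Require Import structures.
From mathcomp Require Import all_boot all_order all_algebra.
Set Implicit Arguments. Unset Strict Implicit. Unset Printing Implicit Defensive.
Import GRing.Theory.

(* Main.v *)
Require Import Defs.
From HB Require Import structures.
From mathcomp Require Import all_boot all_order all_algebra.
Import GRing.Theory.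
Local Open Scope ring_scope.

Theorem corollary2p1p5 (G : zmodType) (n : nat) (P : nat -> G) (a b : G) :
  (4 <= n)%N -> ~~ odd n ->
  (forall i j : nat, (i < n)%N -> (j < n)%N -> i <> j -> P i <> P j) ->
  (forall i : nat, (i < n)%N ->
     P i + P (i.+1 %% n)%N = (if odd i then b else a)) ->
  exists x : G, x != 0 /\ x *+ n./2 = 0.
Proof.
move=> n4 ev dist H.
have step : forall k, (k.*2.+2 < n)%N -> P k.*2.+2 = P k.*2 + (b - a).
  move=> k lt.
  have h1 := H k.*2 (ltnW (ltnW lt)).
  have h2 := H k.*2.+1 (ltnW lt).
  rewrite modn_small ?(ltnW lt) // odd_double in h1.
  rewrite modn_small // /= odd_double /= in h2.
  have e1 : P k.*2.+1 = a - P k.*2 by rewrite -h1 addrC addKr.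
  have e2 : P k.*2.+2 = b - P k.*2.+1 by rewrite -h2 addrC addKr.
  by rewrite e2 e1 opprB addrCA.
have gen : forall k, (k.*2 < n)%N -> P k.*2 = P 0%N + (b - a) *+ k.
  elim=> [|k IH] lt; first by rewrite mulr0n addr0.
  rewrite doubleS in lt *.
  by rewrite step // IH ?(ltnW (ltnW lt)) // mulrS -addrA [_ *+ k + _]addrC.
have hn : n = (n./2).*2 by rewrite -{1}(odd_double_half n) (negbTE ev).
exists (b - a); split.
  apply/eqP => e.
  have h : P 2%N = P 0%N + (b - a) *+ 1 := gen 1%N (leq_trans (isT : (2 < 4)%N) n4).
  apply: (dist 2%N 0%N) => //; first exact: leq_trans n4; first exact: leq_trans n4.
  by rewrite h e mul0rn addr0.
set m := n./2 in hn.
have m2 : (2 <= m)%N by rewrite -leq_double -hn.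
have k1 : (m.-1).*2.+2 = n by rewrite hn -doubleS prednK // (leq_trans _ m2).
have g := gen m.-1.
have h1 := H (m.-1).*2.
have h2 := H (m.-1).*2.+1.
rewrite k1 modnn in h2.
rewrite modn_small ?odd_double in h1; last by rewrite -k1.
rewrite /= odd_double /= in h2.
have lt1 : ((m.-1).*2 < n)%N by rewrite -k1 ltnW.
have lt2 : ((m.-1).*2.+1 < n)%N by rewrite -k1.
have e1 : P (m.-1).*2.+1 = a - P (m.-1).*2 by rewrite -(h1 lt1) addrC addKr.
have := h2 (leqnn n); rewrite e1 (g lt1) => e.
set y := (b - a) *+ m.-1 in e.
have e' : a - y = b by rewrite -e opprD addrA addrAC subrK.
rewrite -/m -(prednK (leq_trans _ m2)) // mulrS -/y -e'.
by rewrite addrAC addrNK subrr.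
Qed.
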